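(* Let $\vec G$ be a $6$-edge-connected bipartite directed graph with vertex classes $A$ and $B$, such that the degree of each vertex of $A$ is divisible by $5$. If $\vec G$ admits a fractional factorization $\mathcal F=(M,F,H)$ for $A$, then $\vec G$ admits an $\mathcal F$-canonical decomposition.
   Context: Graphs are simple. A directed graph is a graph together with an orientation of its edges; its edges are ordered pairs $(u,v)$ (written $uv$, directed from $u$ to $v$); it is $k$-edge-connected if its underlying (undirected) graph is. A sequence of vertices $v_0v_1\cdots v_k$ of a directed graph is a trail (resp. path) if it is a trail (resp. path) in the underlying undirected graph (orientations are ignored); its length is $k$. For a set $S$ of directed edges, $d^+_S(v)$, $d^-_S(v)$ are out- and in-degree of $v$ in the subgraph formed by $S$. A fractional factorization $(M,F,H)$ of $\vec G$ for $A$ is a partition of the edge set of $\vec G$ into three sets $M,F,H$ such that: (i) every edge of $M$ is directed from $B$ to $A$; (ii) for every $v\in A$, $d^-_F(v)=d^+_F(v)=d^-_H(v)=d^+_H(v)=d^-_M(v)=d(v)/5$; (iii) for every $v\in B$, $d^-_F(v)=d^+_F(v)$ and $d^-_H(v)=d^+_H(v)$. For $\mathcal F=(M,F,H)$: a trail $abcde$ of length $4$ with $ab\in M$, $bc,cd\in F$, $de\in H$ is an $\mathcal F$-basic path if it is a path. A trail $abcdef$ of length 5 such that $abcde$ is an $\mathcal F$-basic path is an $\mathcal F$-canonical path if it is a path, and an $\mathcal F$-canonical trail otherwise. An $\mathcal F$-canonical decomposition of $\vec G$ is a partition of its edge set into edge sets of $\mathcal F$-canonical paths and $\mathcal F$-canonical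 trails. *)

(* Defs.v *)
From mathcomp Require Import all_boot.
Set Implicit Arguments. Unset Strict Implicit. Unset Printing Implicit Defensive.

(* A directed graph on the finite vertex type T is given by a relation
   d : rel T, where d u v means the directed edge uv (from u to v) is present. *)
Definition simple_digraph (T : finType) (d : rel T) : Prop :=
  (forall x, ~~ d x x) /\ (forall x y, ~~ (d x y && d y x)).

Definition adj (T : finType) (d : rel T) : rel T := fun x y => d x y || d y x.

Definition edges (T : finType) (d : rel T) : {set T * T} :=
  [set e | d e.1 e.2].

Definition deg (T : finType) (d : rel T) (v : T) : nat := #|[set u | adj d v u]|.

Definition connected_rel (T : finType) (r : rel T) : Prop :=
  forall x y, connect r x y.

Definition k_edge_connected (T : finType) (d : rel T) (k : nat) : Prop :=
  1 < #|T| /\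
  forall S : {set T * T}, #|S :&: edges d| < k ->
    connected_rel (adj (fun x y => d x y && ((x, y) \notin S))).

Definition bipartite_classes (T : finType) (d : rel T) (A : {set T}) : Prop :=
  forall x y, d x y -> (x \in A) != (y \in A).

Definition outdeg (T : finType) (S : {set T * T}) (v : T) : nat :=
  #|[set e in S | e.1 == v]|.
Definition indeg (T : finType) (S : {set T * T}) (v : T) : nat :=
  #|[set e in S | e.2 == v]|.

Definition fractional_factorization (T : finType) (d : rel T) (A : {set T})
    (M F H : {set T * T}) : Prop :=
  [/\ M :|: F :|: H = edges d,
      [disjoint M & F], [disjoint M & H] & [disjoint F & H]] /\
  (forall e, e \in M -> (e.1 \in ~: A) && (e.2 \in A)) /\
      (forall v, v \in A ->
         [/\ indeg F v = deg d v %/ 5, outdeg F v = deg d v %/ 5,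
             indeg H v = deg d v %/ 5, outdeg H v = deg d v %/ 5 &
             indeg M v = deg d v %/ 5]) /\
      (forall v, v \in ~: A -> indeg F v = outdeg F v /\ indeg H v = outdeg H v).

Definition dedge (T : finType) (d : rel T) (x y : T) : T * T :=
  if d x y then (x, y) else (y, x).

Definition walk_edges (T : finType) (d : rel T) (s : seq T) : seq (T * T) :=
  match s with [::] => [::] | x :: t => pairmap (dedge d) x t end.

(* trail in the underlying graph (orientations ignored): consecutive vertices
   adjacent, edges pairwise distinct. Its length is size s - 1. *)
Definition is_trail (T : finType) (d : rel T) (s : seq T) : bool :=
  match s with [::] => false | x :: t => path (adj d) x t && uniq (walk_edges d s) end.

Definition is_path (T : finType) (d : rel T) (s : seq T) : bool :=
  is_trail d s && uniq s.

Definition basic_path (T : finType) (d : rel T) (M F H : {set T * T}) (s : seq T)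
  : bool :=
  match s with
  | [:: a; b; c; e1; e2] =>
      [&& is_path d s, (a, b) \in M, (b, c) \in F, (c, e1) \in F & (e1, e2) \in H]
  | _ => false
  end.

Definition canonical_walk (T : finType) (d : rel T) (M F H : {set T * T}) (s : seq T)
  : bool :=
  [&& size s == 6, is_trail d s & basic_path d M F H (take 5 s)].

Definition canonical_path (T : finType) (d : rel T) (M F H : {set T * T}) (s : seq T)
  : bool := canonical_walk d M F H s && is_path d s.

Definition canonical_trail (T : finType) (d : rel T) (M F H : {set T * T}) (s : seq T)
  : bool := canonical_walk d M F H s && ~~ is_path d s.

Definition canonical_decomposition (T : finType) (d : rel T) (M F H : {set T * T})
  : Prop :=
  exists P : seq (seq T),
    [/\ (forall s, s \in P -> canonical_path d M F H s || canonical_trail d M F H s),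
        (forall e, e \in edges d <-> exists2 s, s \in P & e \in walk_edges d s) &
        (forall i j, i < size P -> j < size P -> i != j ->
           [disjoint [set e in walk_edges d (nth [::] P i)]
                   & [set e in walk_edges d (nth [::] P j)]])].

(* Main.v *)
Require Import Defs.
From mathcomp Require Import all_boot zify.
From Stdlib Require Import Classical.
Set Implicit Arguments. Unset Strict Implicit. Unset Printing Implicit Defensive.

Section Core.
Variables (X V C : finType) (D : {set X}) (st en : X -> V) (SL TL : V -> {set C}).

Definition valid (lab tip : X -> C) : Prop :=
  [/\ forall x, x \in D -> lab x \in SL (st x),
      forall x, x \in D -> tip x \in TL (en x),
      forall x y, x \in D -> y \in D -> st x = st y -> lab x = lab y -> x = y &
      forall x y, x \in D -> y \in D -> en x = en y -> tip x = tip y -> x = y].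

Definition badset (lab tip : X -> C) := [set x in D | lab x == tip x].
Definition nbad lab tip := #|badset lab tip|.
Definition minimal lab tip :=
  valid lab tip /\ forall l t, valid l t -> nbad lab tip <= nbad l t.

Definition sw (x y z : X) : X := if z == x then y else if z == y then x else z.

Lemma sw_x x y : sw x y x = y. Proof. by rewrite /sw eqxx. Qed.
Lemma sw_y x y : sw x y y = x.
Proof. rewrite /sw eqxx; case: (y =P x) => [->//|]; by []. Qed.
Lemma sw_o x y z : z != x -> z != y -> sw x y z = z.
Proof. by rewrite /sw => /negbTE -> /negbTE ->. Qed.

Lemma swK x y : involutive (sw x y).
Proof.
move=> z; case: (z =P x) => [->|/eqP Hzx]; first by rewrite sw_x sw_y.
case: (z =P y) => [->|/eqP Hzy]; first by rewrite sw_y sw_x.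
by rewrite !sw_o.
Qed.

Lemma sw_inj x y : injective (sw x y).
Proof. exact: can_inj (swK x y). Qed.

Lemma sw_key (k : X -> V) x y z : k x = k y -> k (sw x y z) = k z.
Proof.
move=> H; rewrite /sw; case: (z =P x) => [->//|_]; case: (z =P y) => [->//|//].
Qed.

Lemma sw_mem x y z : x \in D -> y \in D -> z \in D -> sw x y z \in D.
Proof. by move=> *; rewrite /sw; case: ifP => //; case: ifP. Qed.

Lemma valid_swl lab tip x y : x \in D -> y \in D -> st x = st y ->
  valid lab tip -> valid (lab \o sw x y) tip.
Proof.
move=> Hx Hy Hs [H1 H2 H3 H4]; split => //.
- move=> z Hz /=; rewrite -(sw_key z Hs); apply: H1; exact: sw_mem.
- move=> z1 z2 Hz1 Hz2 Hst /= Hl; suff: sw x y z1 = sw x y z2 by apply: sw_inj.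
  apply: H3 => //; try exact: sw_mem.
  by rewrite !(sw_key _ Hs).
Qed.

Lemma valid_swt lab tip x y : x \in D -> y \in D -> en x = en y ->
  valid lab tip -> valid lab (tip \o sw x y).
Proof.
move=> Hx Hy Hs [H1 H2 H3 H4]; split => //.
- move=> z Hz /=; rewrite -(sw_key z Hs); apply: H2; exact: sw_mem.
- move=> z1 z2 Hz1 Hz2 Hst /= Hl; suff: sw x y z1 = sw x y z2 by apply: sw_inj.
  apply: H4 => //; try exact: sw_mem.
  by rewrite !(sw_key _ Hs).
Qed.

Lemma minimal_en lab tip P Q : minimal lab tip -> P \in D -> lab P = tip P ->
  Q \in D -> en Q = en P -> lab Q = lab P.
Proof.
move=> [Hv Hmin] HP Hb HQ HeQ; case: (lab Q =P lab P) => // Hne.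
have HQP : Q != P by apply/eqP => E; apply: Hne; rewrite E.
have Hv' := valid_swt HP HQ (esym HeQ) Hv.
have := Hmin _ _ Hv'.
have : badset lab (tip \o sw P Q) \subset badset lab tip :\ P.
  apply/subsetP => z; rewrite !inE /= => /andP [Hz /eqP Hzb].
  case: (z =P P) => [Ez|/eqP HzP].
    exfalso; subst z; rewrite sw_x in Hzb.
    case: Hv => _ _ _ H4; move/eqP: HQP; apply; apply: H4 => //; congruence.
  case: (z =P Q) => [Ez|/eqP HzQ].
    exfalso; subst z; rewrite sw_y in Hzb; congruence.
  by rewrite sw_o // in Hzb; rewrite ?HzP ?Hz Hzb ?eqxx ?orbT.
move/subset_leq_card; rewrite /nbad (cardsD1 P (badset lab tip)) !inE HP Hb eqxx /=.
move=> H1 H2; have := leq_trans H2 H1; by rewrite ltnn.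
Qed.

Lemma minimal_st lab tip P Q : minimal lab tip -> P \in D -> lab P = tip P ->
  Q \in D -> st Q = st P -> tip Q = tip P.
Proof.
move=> [Hv Hmin] HP Hb HQ HsQ; case: (tip Q =P tip P) => // Hne.
have HQP : Q != P by apply/eqP => E; apply: Hne; rewrite E.
have Hv' := valid_swl HP HQ (esym HsQ) Hv.
have := Hmin _ _ Hv'.
have : badset (lab \o sw P Q) tip \subset badset lab tip :\ P.
  apply/subsetP => z; rewrite !inE /= => /andP [Hz /eqP Hzb].
  case: (z =P P) => [Ez|/eqP HzP].
    exfalso; subst z; rewrite sw_x in Hzb.
    case: Hv => _ _ H3 _; move/eqP: HQP; apply; apply: H3 => //; congruence.
  case: (z =P Q) => [Ez|/eqP HzQ].
    exfalso; subst z; rewrite sw_y in Hzb; congruence.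
  by rewrite sw_o // in Hzb; rewrite ?HzP ?Hz Hzb ?eqxx ?orbT.
move/subset_leq_card; rewrite /nbad (cardsD1 P (badset lab tip)) !inE HP Hb eqxx /=.
move=> H1 H2; have := leq_trans H2 H1; by rewrite ltnn.
Qed.

Lemma nbad_move lab tip lab' tip' P Q : P \in D -> lab P = tip P ->
  badset lab' tip' \subset Q |: (badset lab tip :\ P) ->
  nbad lab' tip' <= nbad lab tip.
Proof.
move=> HP Hb /subset_leq_card H; apply: (leq_trans H).
rewrite cardsU1 /nbad (cardsD1 P (badset lab tip)).
have -> : (P \in badset lab tip) = true by rewrite inE HP Hb eqxx.
have := leq_b1 (Q \notin badset lab tip :\ P); lia.
Qed.

Lemma prop_st lab tip P Q : minimal lab tip -> P \in D -> lab P = tip P ->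
  Q \in D -> st Q = st P -> Q != P -> minimal (lab \o sw P Q) tip.
Proof.
move=> Hm HP Hb HQ HsQ HQP; have [Hv Hmin] := Hm.
have HtQ := minimal_st Hm HP Hb HQ HsQ.
split; first exact: valid_swl.
move=> l t Hlt; apply: leq_trans (Hmin _ _ Hlt).
apply: (nbad_move (Q:=Q) HP Hb).
apply/subsetP => z; rewrite !inE /= => /andP [Hz /eqP Hzb].
case: (z =P P) => [Ez|/eqP HzP].
  exfalso; subst z; rewrite sw_x in Hzb.
  case: Hv => _ _ H3 _; move/eqP: HQP; apply; apply: H3 => //; congruence.
case: (z =P Q) => [Ez|/eqP HzQ]; first by rewrite ?Ez ?eqxx.
by rewrite sw_o // in Hzb; rewrite ?HzP ?Hz Hzb ?eqxx ?orbT.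
Qed.

Lemma prop_en lab tip P Q : minimal lab tip -> P \in D -> lab P = tip P ->
  Q \in D -> en Q = en P -> Q != P -> minimal lab (tip \o sw P Q).
Proof.
move=> Hm HP Hb HQ HeQ HQP; have [Hv Hmin] := Hm.
have HlQ := minimal_en Hm HP Hb HQ HeQ.
split; first exact: valid_swt.
move=> l t Hlt; apply: leq_trans (Hmin _ _ Hlt).
apply: (nbad_move (Q:=Q) HP Hb).
apply/subsetP => z; rewrite !inE /= => /andP [Hz /eqP Hzb].
case: (z =P P) => [Ez|/eqP HzP].
  exfalso; subst z; rewrite sw_x in Hzb.
  case: Hv => _ _ _ H4; move/eqP: HQP; apply; apply: H4 => //; congruence.
case: (z =P Q) => [Ez|/eqP HzQ]; first by rewrite ?Ez ?eqxx.
by rewrite sw_o // in Hzb; rewrite ?HzP ?Hz Hzb ?eqxx ?orbT.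
Qed.

Definition R : rel X := fun y z => (z \in D) && ((st y == st z) || (en y == en z)).

Lemma claim p : forall lab tip P, minimal lab tip -> P \in D -> lab P = tip P ->
  path R P p -> lab (last P p) = lab P \/ tip (last P p) = lab P.
Proof.
elim: p => [|z p IH] lab tip P Hm HP Hb /=; first by left.
move=> /andP [/andP [Hz Hor] Hp].
case: (z =P P) => [Ez|/eqP HzP]; first by subst z; exact: IH.
case/orP: Hor => /eqP Hor.
- have HtQ := minimal_st Hm HP Hb Hz (esym Hor).
  have Hm1 := prop_st Hm HP Hb Hz (esym Hor) HzP.
  have Hb1 : (lab \o sw P z) z = tip z by rewrite /= sw_y HtQ.
  have := IH _ _ _ Hm1 Hz Hb1 Hp; rewrite /= sw_y.
  set w := last z p.
  case: (w =P P) => [->|/eqP HwP]; first by left.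
  case: (w =P z) => [->|/eqP Hwz]; first by right; rewrite HtQ.
  by rewrite sw_o.
- have HlQ := minimal_en Hm HP Hb Hz (esym Hor).
  have Hm1 := prop_en Hm HP Hb Hz (esym Hor) HzP.
  have Hb1 : lab z = (tip \o sw P z) z by rewrite /= sw_y HlQ.
  have := IH _ _ _ Hm1 Hz Hb1 Hp; rewrite /= HlQ.
  set w := last z p.
  case: (w =P P) => [->|/eqP HwP]; first by left.
  case: (w =P z) => [->|/eqP Hwz]; first by left.
  by rewrite sw_o.
Qed.

Lemma path_last_in p x : x \in D -> path R x p -> last x p \in D.
Proof. elim: p x => [|y p IH] x //= Hx /andP [/andP [Hy _] Hp]; exact: IH. Qed.

Hypothesis fib_st : forall x, x \in D -> [exists y, [&& y \in D, y != x & st y == st x]].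
Hypothesis fib_en : forall x, x \in D -> [exists y, [&& y \in D, y != x & en y == en x]].

Lemma no_minimal_bad lab tip P : minimal lab tip -> P \in D -> lab P = tip P -> False.
Proof.
move=> Hm HP Hb; have [[_ _ H3 H4] _] := Hm.
set a := lab P.
set K := [set z | connect R P z].
have KD : forall z, z \in K -> z \in D.
  by move=> z; rewrite inE => /connectP [p Hp ->]; exact: path_last_in.
have Kcl : forall z, z \in K -> lab z = a \/ tip z = a.
  move=> z; rewrite inE => /connectP [p Hp ->]; exact: claim.
set La := [set z in K | lab z == a].
set Ta := [set z in K | tip z == a].
have PK : P \in K by rewrite inE connect0.
have sub : K \subset La :|: Ta.
  apply/subsetP => z Hz; rewrite in_setU.
  by case: (Kcl z Hz) => E; apply/orP; [left|right]; rewrite inE Hz E eqxx.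
have HI : 0 < #|La :&: Ta|.
  apply/card_gt0P; exists P; rewrite in_setI; apply/andP; split; apply/setIdP; split => //; by rewrite /a Hb.
have HU := cardsU La Ta.
have H1 := subset_leq_card sub.
pose pl z := odflt z [pick y | [&& y \in D, y != z & st y == st z]].
pose pt z := odflt z [pick y | [&& y \in D, y != z & en y == en z]].
have plP : forall z, z \in D -> [&& pl z \in D, pl z != z & st (pl z) == st z].
  move=> z Hz; rewrite /pl; case: pickP => [y Hy //|Hn].
  by move/existsP: (fib_st Hz) => [y Hy]; rewrite Hn in Hy.
have ptP : forall z, z \in D -> [&& pt z \in D, pt z != z & en (pt z) == en z].
  move=> z Hz; rewrite /pt; case: pickP => [y Hy //|Hn].
  by move/existsP: (fib_en Hz) => [y Hy]; rewrite Hn in Hy.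
have La_sub : La \subset K by apply/subsetP => z; rewrite inE => /andP [].
have Ta_sub : Ta \subset K by apply/subsetP => z; rewrite inE => /andP [].
have HL : #|La| <= #|K :\: La|.
  have <- : #|pl @: La| = #|La|.
    apply: card_in_imset => z1 z2 /setIdP [K1 /eqP L1] /setIdP [K2 /eqP L2] E.
    have /and3P [_ _ /eqP S1] := plP z1 (KD z1 K1).
    have /and3P [_ _ /eqP S2] := plP z2 (KD z2 K2).
    apply: H3 => //; try exact: KD; congruence.
  apply: subset_leq_card; apply/subsetP => w /imsetP [z Hz ->].
  move: Hz => /setIdP [Kz /eqP Lz].
  have /and3P [D1 N1 /eqP S1] := plP z (KD z Kz).
  rewrite in_setD; apply/andP; split.
    apply/negP => /setIdP [_ /eqP L1]; move/eqP: N1; apply; apply: H3 => //; [exact: KD|congruence].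
  move: Kz; rewrite !inE => Kz; apply: connect_trans Kz (connect1 _).
  by rewrite /R D1 S1 eqxx.
have HT : #|Ta| <= #|K :\: Ta|.
  have <- : #|pt @: Ta| = #|Ta|.
    apply: card_in_imset => z1 z2 /setIdP [K1 /eqP L1] /setIdP [K2 /eqP L2] E.
    have /and3P [_ _ /eqP S1] := ptP z1 (KD z1 K1).
    have /and3P [_ _ /eqP S2] := ptP z2 (KD z2 K2).
    apply: H4 => //; try exact: KD; congruence.
  apply: subset_leq_card; apply/subsetP => w /imsetP [z Hz ->].
  move: Hz => /setIdP [Kz /eqP Lz].
  have /and3P [D1 N1 /eqP S1] := ptP z (KD z Kz).
  rewrite in_setD; apply/andP; split.
    apply/negP => /setIdP [_ /eqP L1]; move/eqP: N1; apply; apply: H4 => //; [exact: KD|congruence].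
  move: Kz; rewrite !inE => Kz; apply: connect_trans Kz (connect1 _).
  by rewrite /R D1 S1 eqxx orbT.
have EL := cardsID La K; rewrite (setIidPr La_sub) in EL.
have ET := cardsID Ta K; rewrite (setIidPr Ta_sub) in ET.
have := subset_leq_card (subsetIl La Ta); lia.
Qed.

Lemma exists_minimal n : forall lab tip, valid lab tip -> nbad lab tip <= n ->
  exists l t, minimal l t.
Proof.
elim: n => [|n IH] lab tip Hv Hn.
  exists lab, tip; split => // l t _; by rewrite leqn0 in Hn; rewrite (eqP Hn).
case: (classic (exists l t, valid l t /\ nbad l t < nbad lab tip)).
  move=> [l [t [Hv' Hlt]]]; apply: (IH l t Hv'); rewrite -ltnS; exact: leq_trans Hlt Hn.
move=> Hno; exists lab, tip; split => // l t Hlt; rewrite leqNgt; apply/negP => Hc.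
by apply: Hno; exists l, t.
Qed.

Theorem core lab0 tip0 : valid lab0 tip0 ->
  exists lab tip, valid lab tip /\ forall x, x \in D -> lab x != tip x.
Proof.
move=> Hv; have [l [t Hm]] := exists_minimal Hv (leqnn _).
exists l, t; split; first by case: Hm.
move=> x Hx; apply/negP => /eqP Hb; exact: no_minimal_bad Hm Hx Hb.
Qed.

End Core.

Lemma fmatch (E V : finType) (P Q : {set E}) (kP kQ : E -> V) :
  (forall v, #|[set x in P | kP x == v]| <= #|[set y in Q | kQ y == v]|) ->
  exists f : E -> E, (forall x, x \in P -> f x \in Q /\ kQ (f x) = kP x) /\
                     {in P &, injective f}.
Proof.
have [n leP] := ubnP #|P|; elim: n P Q leP => [|n IH] P Q leP Hf //.
case: (set_0Vmem P) => [->|[x0 Hx0]].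
  by exists id; split => // x; rewrite inE.
have : 0 < #|[set y in Q | kQ y == kP x0]|.
  apply: leq_trans (Hf (kP x0)); apply/card_gt0P; exists x0; by rewrite inE Hx0 eqxx.
move/card_gt0P => [y0]; rewrite inE => /andP [Hy0 /eqP Ky0].
have leP' : #|P :\ x0| < n.
  by move: leP; rewrite (cardsD1 x0 P) Hx0.
have Hf' : forall v, #|[set x in P :\ x0 | kP x == v]| <= #|[set y in Q :\ y0 | kQ y == v]|.
  move=> v.
  have E1 : [set x in P :\ x0 | kP x == v] = [set x in P | kP x == v] :\ x0.
    by apply/setP => x; rewrite !inE andbA.
  have E2 : [set y in Q :\ y0 | kQ y == v] = [set y in Q | kQ y == v] :\ y0.
    by apply/setP => x; rewrite !inE andbA.
  have := Hf v.
  rewrite E1 E2 (cardsD1 x0 [set x in P | kP x == v]) (cardsD1 y0 [set y in Q | kQ y == v]).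
  by rewrite !inE Hx0 Hy0 Ky0 /=; case: (kP x0 == v) => /=.
have [f' [Hf1 Hf2]] := IH _ _ leP' Hf'.
exists (fun x => if x == x0 then y0 else f' x); split.
  move=> x Hx; case: (x =P x0) => [->//|/eqP Hxx0].
  have Hx' : x \in P :\ x0 by rewrite !inE Hxx0.
  by have [] := Hf1 x Hx'; rewrite inE => /andP [].
move=> x1 x2 Hx1 Hx2 /=.
case: (x1 =P x0) => [->|/eqP N1]; case: (x2 =P x0) => [->|/eqP N2] //.
- move=> Ee; have Hx2' : x2 \in P :\ x0 by rewrite !inE N2.
  by have [] := Hf1 x2 Hx2'; rewrite !inE -Ee eqxx.
- move=> Ee; have Hx1' : x1 \in P :\ x0 by rewrite !inE N1.
  by have [] := Hf1 x1 Hx1'; rewrite !inE Ee eqxx.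
- by apply: Hf2; rewrite !inE ?N1 ?N2.
Qed.

Lemma inj_surj (E1 E2 : finType) (P : {set E1}) (Q : {set E2}) (f : E1 -> E2) :
  {in P &, injective f} -> (forall x, x \in P -> f x \in Q) -> #|Q| <= #|P| ->
  forall y, y \in Q -> exists2 x, x \in P & f x = y.
Proof.
move=> Hi Hm Hc y Hy.
have Hs : f @: P \subset Q by apply/subsetP => z /imsetP [x Hx ->]; exact: Hm.
have : f @: P == Q by rewrite eqEcard Hs (card_in_imset Hi).
move/eqP => E; rewrite -E in Hy; case/imsetP: Hy => x Hx ->; by exists x.
Qed.

Section App.
Variables (T : finType) (d : rel T) (A : {set T}) (M F H : {set T * T}).
Hypotheses (hs : simple_digraph d) (hb : bipartite_classes d A)
  (hE : M :|: F :|: H = edges d) (hMF : [disjoint M & F]) (hMH : [disjoint M & H])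
  (hFH : [disjoint F & H])
  (hMdir : forall e, e \in M -> (e.1 \in ~: A) && (e.2 \in A))
  (hA1 : forall v, v \in A -> indeg M v = outdeg F v)
  (hA2 : forall v, v \in A -> indeg F v = outdeg H v)
  (hA3 : forall v, v \in A -> indeg F v = outdeg F v)
  (hAk : forall v, v \in A -> 2 <= outdeg F v)
  (hBF : forall v, v \notin A -> indeg F v = outdeg F v)
  (hBH : forall v, v \notin A -> indeg H v = outdeg H v).

Lemma edgeP e : e \in M :|: F :|: H -> d e.1 e.2.
Proof. by rewrite hE inE. Qed.
Lemma edgeM e : e \in M -> d e.1 e.2.
Proof. by move=> He; apply: edgeP; rewrite !inE He. Qed.
Lemma edgeF e : e \in F -> d e.1 e.2.
Proof. by move=> He; apply: edgeP; rewrite !inE He orbT. Qed.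
Lemma edgeH e : e \in H -> d e.1 e.2.
Proof. by move=> He; apply: edgeP; rewrite !inE He orbT. Qed.

Lemma bip u v : d u v -> (v \in A) = (u \notin A).
Proof. by move/hb; case: (u \in A); case: (v \in A). Qed.

Lemma nsym u v : d u v -> d v u = false.
Proof. case: hs => _ H2 Huv; apply/negP => Hvu; by have := H2 u v; rewrite Huv Hvu. Qed.

Lemma nloop u : d u u = false.
Proof. by case: hs => H1 _; apply/negbTE. Qed.

Local Notation SAB S := [set x in S | x.1 \in A].
Local Notation SBA S := [set x in S | x.1 \notin A].

Lemma stage (S : {set T * T}) : (forall e, e \in S -> d e.1 e.2) ->
  (forall c, c \notin A -> indeg S c = outdeg S c) ->
  exists s : T * T -> T * T,
    [/\ forall x, x \in SAB S -> s x \in SBA S /\ (s x).1 = x.2,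
        {in SAB S &, injective s} &
        forall y, y \in SBA S -> exists2 x, x \in SAB S & s x = y].
Proof.
move=> hSe hS.
have [s [Hs1 Hs2]] : exists f : T * T -> T * T,
   (forall x, x \in SAB S -> f x \in SBA S /\ (f x).1 = x.2) /\ {in SAB S &, injective f}.
  apply: (fmatch (kP := snd) (kQ := fst)) => v.
  case: (boolP (v \in A)) => Hv.
    suff -> : [set x in SAB S | x.2 == v] = set0 by rewrite cards0.
    apply/setP => x; rewrite !inE.
    apply/negbTE/negP => /andP [/andP [Hx HxA] /eqP Hx2].
    by move: (bip (hSe x Hx)); rewrite Hx2 Hv HxA.
  apply: (@leq_trans (indeg S v)).
    apply: subset_leq_card; apply/subsetP => x; rewrite !inE; by case/andP => /andP [-> _].
  rewrite hS //; apply: subset_leq_card; apply/subsetP => x; rewrite !inE => /andP [-> /eqP ->].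
  by rewrite Hv eqxx.
exists s; split => // y Hy.
have Hy1 : y.1 \notin A by move: Hy; rewrite inE => /andP [].
suff [x Hx Hsx] : exists2 x, x \in [set x in SAB S | x.2 == y.1] & s x = y.
  by exists x => //; move: Hx; rewrite inE => /andP [].
apply: (@inj_surj _ _ _ [set z in SBA S | z.1 == y.1] s).
- by move=> x1 x2; rewrite !inE => /andP [H1 _] /andP [H2 _]; apply: Hs2; rewrite inE.
- move=> x; rewrite !inE => /andP [Hx /eqP Hx2].
  have Hx' : x \in SAB S by rewrite inE.
  have [Hsx Hsx1] := Hs1 x Hx'; move: Hsx; rewrite !inE Hsx1 Hx2 eqxx andbT; by [].
- apply: (@leq_trans (outdeg S y.1)).
    apply: subset_leq_card; apply/subsetP => z; rewrite !inE; by case/andP => /andP [-> _].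
  rewrite -hS //; apply: subset_leq_card; apply/subsetP => x; rewrite !inE => /andP [Hx /eqP Hx2].
  rewrite Hx Hx2 eqxx /= andbT.
  by have := bip (hSe x Hx); rewrite Hx2 (negbTE Hy1) => /esym /negbFE.
- by move: Hy; rewrite !inE eqxx andbT.
Qed.

Section WithS1.
Variable s1 : T * T -> T * T.
Hypotheses (s1P : forall x, x \in SAB F -> s1 x \in SBA F /\ (s1 x).1 = x.2)
  (s1I : {in SAB F &, injective s1})
  (s1S : forall y, y \in SBA F -> exists2 x, x \in SAB F & s1 x = y).

Local Notation D := (SAB F).
Local Notation en := (fun x => (s1 x).2).
Local Notation SL := (fun v => [set a | (a, v) \in M]).
Local Notation TL := (fun v => [set e | (v, e) \in H]).

Lemma DP x : x \in D -> [/\ x \in F, x.1 \in A & x.2 \notin A].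
Proof.
rewrite inE => /andP [Hx HA]; split => //.
by rewrite (bip (edgeF Hx)) HA.
Qed.

Lemma enP x : x \in D -> [/\ s1 x \in F, (s1 x).1 = x.2 & (s1 x).2 \in A].
Proof.
move=> Hx; have [Hs Hs1] := s1P Hx; move: Hs; rewrite inE => /andP [HF HnA].
by split => //; rewrite (bip (edgeF HF)) HnA.
Qed.

Lemma cardSt v : v \in A -> outdeg F v <= #|[set x in D | x.1 == v]|.
Proof.
move=> Hv; apply: subset_leq_card; apply/subsetP => x; rewrite !inE => /andP [Hx /eqP ->].
by rewrite Hx Hv eqxx.
Qed.

Lemma cardEn v : v \in A -> indeg F v <= #|[set x in D | (s1 x).2 == v]|.
Proof.
move=> Hv; apply: (@leq_trans #|s1 @: [set x in D | (s1 x).2 == v]|); last exact: leq_imset_card.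
apply: subset_leq_card; apply/subsetP => e; rewrite !inE => /andP [He /eqP He2].
have HeBA : e \in SBA F.
  by rewrite inE He /= -(bip (edgeF He)) He2 Hv.
have [x Hx Hxe] := s1S HeBA; apply/imsetP; exists x => //.
by move: Hx; rewrite !inE Hxe He2 eqxx andbT.
Qed.

Lemma labtip : exists lab tip : T * T -> T,
  valid D fst en SL TL lab tip /\ forall x, x \in D -> lab x != tip x.
Proof.
have [f0 [Hf0 If0]] : exists f : T * T -> T * T,
   (forall x, x \in D -> f x \in M /\ (f x).2 = x.1) /\ {in D &, injective f}.
  apply: (fmatch (kP := fst) (kQ := snd)) => v.
  case: (boolP (v \in A)) => Hv.
    have := hA1 Hv; rewrite /indeg /outdeg => ->.
    apply: subset_leq_card; apply/subsetP => x; rewrite !inE.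
    by case/andP => /andP [-> _] ->.
  suff -> : [set x in D | x.1 == v] = set0 by rewrite cards0.
  apply/setP => x; rewrite !inE; apply/negbTE/negP => /andP [/andP [_ HA] /eqP Hx1].
  by move: Hv; rewrite -Hx1 HA.
have [g0 [Hg0 Ig0]] : exists f : T * T -> T * T,
   (forall x, x \in D -> f x \in SAB H /\ (f x).1 = (s1 x).2) /\ {in D &, injective f}.
  apply: (fmatch (kP := en) (kQ := fst)) => v.
  case: (boolP (v \in A)) => Hv.
    apply: (@leq_trans (indeg F v)).
      apply: (@leq_trans #|s1 @: [set x in D | (s1 x).2 == v]|).
        by rewrite card_in_imset // => x1 x2; rewrite !inE => /andP [H1 _] /andP [H2 _];
          apply: s1I; rewrite inE.
      apply: subset_leq_card; apply/subsetP => e /imsetP [x]; rewrite inE => /andP [Hx /eqP Hx2] ->.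
      have [HF _ _] := enP Hx; by rewrite !inE HF Hx2 eqxx.
    rewrite hA2 //; apply: subset_leq_card; apply/subsetP => e; rewrite !inE => /andP [He /eqP ->].
    by rewrite He Hv eqxx.
  suff -> : [set x in D | (s1 x).2 == v] = set0 by rewrite cards0.
  apply/setP => x; rewrite in_set0 [in LHS]inE; apply/negbTE/negP => /andP [Hx /eqP Hx1].
  have [_ _ HA] := enP Hx; by move: Hv; rewrite -Hx1 HA.
pose lab0 x := (f0 x).1; pose tip0 x := (g0 x).2.
have Hv0 : valid D fst en SL TL lab0 tip0.
  split.
  - move=> x Hx; have [Hm Hm2] := Hf0 x Hx; rewrite inE /lab0 -Hm2 -surjective_pairing //.
  - move=> x Hx; have [Hm Hm2] := Hg0 x Hx; move: Hm; rewrite inE /tip0 -Hm2 -surjective_pairing.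
    by rewrite inE => /andP [].  
  - move=> x y Hx Hy /= Exy Lxy; apply: If0 => //.
    have [_ E1] := Hf0 x Hx; have [_ E2] := Hf0 y Hy.
    by rewrite [f0 x]surjective_pairing [f0 y]surjective_pairing E1 E2 Exy; move: Lxy; rewrite /lab0 => ->.
  - move=> x y Hx Hy /= Exy Lxy; apply: Ig0 => //.
    have [_ E1] := Hg0 x Hx; have [_ E2] := Hg0 y Hy.
    by rewrite [g0 x]surjective_pairing [g0 y]surjective_pairing E1 E2 Exy; move: Lxy; rewrite /tip0 => ->.
apply: (core _ _ Hv0).
- move=> x Hx; have [_ HA _] := DP Hx.
  have := leq_trans (hAk HA) (cardSt HA); rewrite (cardsD1 x) inE Hx eqxx /= add1n ltnS.
  case/card_gt0P => y; rewrite !inE => /andP [Hyx /andP [Hy /eqP Hy1]].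
  apply/existsP; exists y; by rewrite inE Hy Hyx Hy1 eqxx.
- move=> x Hx; have [_ _ HA] := enP Hx.
  have := leq_trans (leq_trans (hAk HA) (eq_leq (esym (hA3 HA)))) (cardEn HA).
  rewrite (cardsD1 x) inE Hx eqxx /= add1n ltnS.
  case/card_gt0P => y; rewrite !inE => /andP [Hyx /andP [Hy /eqP Hy1]].
  apply/existsP; exists y; by rewrite inE Hy Hyx Hy1 eqxx.
Qed.

End WithS1.

Section Assemble.
Variables (s1 s2 : T * T -> T * T) (lab tip : T * T -> T).
Hypotheses (s1P : forall x, x \in SAB F -> s1 x \in SBA F /\ (s1 x).1 = x.2)
  (s1I : {in SAB F &, injective s1})
  (s1S : forall y, y \in SBA F -> exists2 x, x \in SAB F & s1 x = y)
  (s2P : forall x, x \in SAB H -> s2 x \in SBA H /\ (s2 x).1 = x.2)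
  (s2I : {in SAB H &, injective s2})
  (s2S : forall y, y \in SBA H -> exists2 x, x \in SAB H & s2 x = y).

Local Notation D := (SAB F).
Definition en x := (s1 x).2.
Local Notation SL := (fun v => [set a | (a, v) \in M]).
Local Notation TL := (fun v => [set e | (v, e) \in H]).

Hypotheses (hv : valid D fst en SL TL lab tip) (hne : forall x, x \in D -> lab x != tip x).

Definition f6 x := (s2 (en x, tip x)).2.
Definition chain x := [:: lab x; x.1; x.2; en x; tip x; f6 x].
Definition el x := [:: (lab x, x.1); (x.1, x.2); (x.2, en x); (en x, tip x); (tip x, f6 x)].

Lemma s1E x : x \in D -> s1 x = (x.2, en x).
Proof. by move=> Hx; have [_ E] := s1P Hx; rewrite [s1 x]surjective_pairing E. Qed.

Lemma xfacts x : x \in D ->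
  [/\ (lab x, x.1) \in M, (x.1, x.2) \in F, (x.2, en x) \in F,
      (en x, tip x) \in H & (tip x, f6 x) \in H].
Proof.
move=> Hx; case: hv => H1 H2 _ _.
have [HF _] := s1P Hx; move: HF; rewrite inE => /andP [HF _].
split.
- by have := H1 x Hx; rewrite inE.
- by move: Hx; rewrite inE -surjective_pairing => /andP [].
- by rewrite -s1E.
- by have := H2 x Hx; rewrite inE.
- have Hh : (en x, tip x) \in SAB H.
    have [_ _ HenA] := enP s1P Hx.
    by rewrite inE /= HenA andbT; have := H2 x Hx; rewrite inE.
  have [Hs Hs1] := s2P Hh; move: Hs; rewrite inE => /andP [Hs _].
  by rewrite /= in Hs1; rewrite [s2 _]surjective_pairing Hs1 in Hs.
Qed.

Lemma sides x : x \in D ->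
  [/\ lab x \notin A, x.1 \in A, x.2 \notin A, en x \in A & tip x \notin A].
Proof.
move=> Hx; have [m1 f1 f2 h1 _] := xfacts Hx.
have [_ HA HB] := DP Hx.
have [_ _ He] := enP s1P Hx.
split => //.
- by have /andP [] := hMdir m1; rewrite inE.
- by have := bip (edgeH h1); rewrite /= He => ->.
Qed.

Lemma dfacts x : x \in D ->
  [/\ d (lab x) x.1, d x.1 x.2, d x.2 (en x), d (en x) (tip x) & d (tip x) (f6 x)].
Proof.
move=> Hx; have [m1 f1 f2 h1 h2] := xfacts Hx.
split; [exact: (edgeM m1)|exact: (edgeF f1)|exact: (edgeF f2)|exact: (edgeH h1)|exact: (edgeH h2)].
Qed.

Lemma dedgeE u v : d u v -> dedge d u v = (u, v).
Proof. by rewrite /dedge => ->. Qed.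

Lemma walkE x : x \in D -> walk_edges d (chain x) = el x.
Proof.
move=> Hx; have [d1 d2 d3 d4 d5] := dfacts Hx.
by rewrite /walk_edges /chain /= !dedgeE.
Qed.

Lemma walkE5 x : x \in D ->
  walk_edges d [:: lab x; x.1; x.2; en x; tip x] = take 4 (el x).
Proof.
move=> Hx; have [d1 d2 d3 d4 d5] := dfacts Hx.
by rewrite /walk_edges /= !dedgeE.
Qed.

Definition cls (e : T * T) : nat :=
  if e \in M then 0 else if e \in F then (if e.1 \in A then 1 else 2)
  else if e.1 \in A then 3 else 4.

Lemma cls_lt e : cls e < 5.
Proof. rewrite /cls; by repeat case: ifP. Qed.

Lemma cls_el x : x \in D -> map cls (el x) = [:: 0; 1; 2; 3; 4].
Proof.
move=> Hx; have [m1 f1 f2 h1 h2] := xfacts Hx.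
have [sa sb sc sd se] := sides Hx.
rewrite /= /cls /=.
rewrite m1 (disjointFl hMF f1) f1 sb (disjointFl hMF f2) f2 (negbTE sc).
by rewrite (disjointFl hMH h1) (disjointFl hFH h1) sd (disjointFl hMH h2) (disjointFl hFH h2) (negbTE se).
Qed.

Lemma uniq_el x : x \in D -> uniq (el x).
Proof. by move=> Hx; apply: (@map_uniq _ _ cls); rewrite cls_el. Qed.

Lemma pos_el x e : x \in D -> e \in el x -> nth e (el x) (cls e) = e.
Proof.
move=> Hx /(nthP e) [i Hi Hie].
have : nth 0 (map cls (el x)) i = cls e by rewrite (nth_map e) // Hie.
rewrite cls_el // => <-.
by move: Hi Hie; rewrite /=; case: i => [|[|[|[|[|i]]]]].
Qed.

Lemma el_inj x y e : x \in D -> y \in D -> e \in el x -> e \in el y -> x = y.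
Proof.
move=> Hx Hy Ex Ey.
have := pos_el Hx Ex; have := pos_el Hy Ey.
have := cls_lt e; case: hv => _ _ I3 I4.
case: (cls e) => [|[|[|[|[|k]]]]] //= _ E1 E2; rewrite -E2 in E1; case: E1.
- by move=> L S; apply: I3 => //=; rewrite ?L ?S.
- by move=> S1 S2; rewrite [x]surjective_pairing [y]surjective_pairing S1 S2.
- by move=> S1 S2; apply: s1I => //; rewrite !s1E // S1 S2.
- by move=> S1 S2; apply: I4.
- move=> S1 S2.
  have Hh : forall z, z \in D -> (en z, tip z) \in SAB H.
    move=> z Hz; have [_ _ _ h1 _] := xfacts Hz; have [_ _ _ He _] := sides Hz.
    by rewrite inE h1 He.
  have : (en y, tip y) = (en x, tip x).
    apply: s2I; rewrite ?Hh //.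
    have s2E : forall z, z \in D -> s2 (en z, tip z) = (tip z, f6 z).
      by move=> z Hz; rewrite [s2 _]surjective_pairing (proj2 (s2P (Hh _ Hz))).
    by rewrite !s2E // S1 S2.
  case => T1 T2; by apply: I4.
Qed.

Lemma el_edges x e : x \in D -> e \in el x -> e \in edges d.
Proof.
move=> Hx; have [m1 f1 f2 h1 h2] := xfacts Hx.
have Hall : all (fun e => e \in M :|: F :|: H) (el x).
  by rewrite /= !inE m1 f1 f2 h1 h2 !orbT.
by move=> He; rewrite -hE; move/allP: Hall; apply.
Qed.

Lemma hSAB z : z \in D -> (en z, tip z) \in SAB H.
Proof.
move=> Hz; have [_ _ _ h1 _] := xfacts Hz; have [_ _ _ He _] := sides Hz.
by rewrite inE h1 He.
Qed.

Lemma s2E z : z \in D -> s2 (en z, tip z) = (tip z, f6 z).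
Proof. by move=> Hz; rewrite [s2 _]surjective_pairing (proj2 (s2P (hSAB Hz))). Qed.

Lemma covM m : m \in M -> exists2 x, x \in D & (lab x, x.1) = m.
Proof.
move=> Hm; have /andP [_ Hv] := hMdir Hm.
case: hv => _ _ I3 _.
suff [x Hx <-] : exists2 x, x \in [set x in D | x.1 == m.2] & (lab x, x.1) = m.
  by exists x => //; move: Hx; rewrite inE => /andP [].
apply: (@inj_surj _ _ _ [set e in M | e.2 == m.2] (fun x => (lab x, x.1))).
- move=> x1 x2 /setIdP [H1 _] /setIdP [H2 _] [L S].
  exact: I3.
- move=> x /setIdP [Hx /eqP E]; have [m1 _ _ _ _] := xfacts Hx.
  by rewrite inE m1 /= E eqxx.
- have := hA1 Hv; rewrite /indeg => ->; exact: cardSt.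
- by rewrite inE Hm eqxx.
Qed.

Lemma covH h : h \in H -> h.1 \in A -> exists2 x, x \in D & (en x, tip x) = h.
Proof.
move=> Hh Hv.
case: hv => _ _ _ I4.
suff [x Hx <-] : exists2 x, x \in [set x in D | en x == h.1] & (en x, tip x) = h.
  by exists x => //; move: Hx; rewrite inE => /andP [].
apply: (@inj_surj _ _ _ [set e in H | e.1 == h.1] (fun x => (en x, tip x))).
- move=> x1 x2 /setIdP [H1 _] /setIdP [H2 _] [L S].
  exact: I4.
- move=> x /setIdP [Hx /eqP E]; have [_ _ _ h1 _] := xfacts Hx.
  by rewrite inE h1 /= E eqxx.
- rewrite -/(outdeg H h.1) -hA2 //; exact: (cardEn s1S).
- by rewrite inE Hh eqxx.
Qed.

Lemma cover e : e \in edges d -> exists2 x, x \in D & e \in el x.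
Proof.
rewrite -hE !inE -orbA => /or3P [He|He|He].
- by have [x Hx E] := covM He; exists x; rewrite // -E inE eqxx.
- case: (boolP (e.1 \in A)) => HA.
    have Hx : e \in D by rewrite inE He HA.
    by exists e; rewrite // !inE -surjective_pairing eqxx orbT.
  have HB : e \in SBA F by rewrite inE He HA.
  have [x Hx E] := s1S HB; exists x => //.
  by rewrite -E s1E // !inE eqxx !orbT.
- case: (boolP (e.1 \in A)) => HA.
    have [x Hx E] := covH He HA; exists x => //.
    by rewrite -E !inE eqxx !orbT.
  have HB : e \in SBA H by rewrite inE He HA.
  have [h Hh E] := s2S HB.
  have [Hh1 Hh2] : h \in H /\ h.1 \in A by move: Hh; rewrite inE => /andP [].
  have [x Hx Ex] := covH Hh1 Hh2; exists x => //.
  by rewrite -E -Ex s2E // !inE eqxx !orbT.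
Qed.

Lemma sdiff u v : u \notin A -> v \in A -> u != v.
Proof. by move=> Hu Hv; apply/eqP => E; move: Hu; rewrite E Hv. Qed.

Lemma canon x : x \in D ->
  canonical_path d M F H (chain x) || canonical_trail d M F H (chain x).
Proof.
move=> Hx.
have [d1 d2 d3 d4 d5] := dfacts Hx.
have [m1 f1 f2 h1 h2] := xfacts Hx.
have [sa sb sc sd se] := sides Hx.
suff Hw : canonical_walk d M F H (chain x).
  by rewrite /canonical_path /canonical_trail Hw; case: (is_path d _).
have Htr : is_trail d (chain x).
  have -> : is_trail d (chain x) =
    path (adj d) (lab x) (behead (chain x)) && uniq (walk_edges d (chain x)) by [].
  by rewrite walkE // uniq_el // andbT /= /adj d1 d2 d3 d4 d5.
rewrite /canonical_walk Htr /=.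
have n1 : lab x != x.1 by apply: sdiff.
have n2 : lab x != x.2 by apply/eqP => E; move: d1; rewrite E (nsym d2).
have n3 : lab x != en x by apply: sdiff.
have n4 : lab x != tip x by apply: hne.
have n5 : x.1 != x.2 by rewrite eq_sym; apply: sdiff.
have n6 : x.1 != en x by apply/eqP => E; move: d3; rewrite -E (nsym d2).
have n7 : x.1 != tip x by rewrite eq_sym; apply: sdiff.
have n8 : x.2 != en x by apply: sdiff.
have n9 : x.2 != tip x by apply/eqP => E; move: d4; rewrite -E (nsym d3).
have n10 : en x != tip x by rewrite eq_sym; apply: sdiff.
rewrite m1 f1 f2 h1 !andbT.
have -> : is_path d [:: lab x; x.1; x.2; en x; tip x] =
  is_trail d [:: lab x; x.1; x.2; en x; tip x] && uniq [:: lab x; x.1; x.2; en x; tip x] by [].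
have -> : is_trail d [:: lab x; x.1; x.2; en x; tip x] =
  path (adj d) (lab x) [:: x.1; x.2; en x; tip x] &&
  uniq (walk_edges d [:: lab x; x.1; x.2; en x; tip x]) by [].
rewrite walkE5 // take_uniq ?uniq_el //= /adj d1 d2 d3 d4 /=.
by rewrite !inE !negb_or n1 n2 n3 n4 n5 n6 n7 n8 n9 n10.
Qed.

Lemma decomp : canonical_decomposition d M F H.
Proof.
exists [seq chain x | x <- enum D]; split.
- by move=> s /mapP [x]; rewrite mem_enum => Hx ->; apply: canon.
- move=> e; split.
    move=> He; have [x Hx Hex] := cover He.
    by exists (chain x); [apply: map_f; rewrite mem_enum | rewrite walkE].
  case=> s /mapP [x]; rewrite mem_enum => Hx -> Hes.
  by apply: (el_edges Hx); rewrite -walkE.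
- move=> i j; rewrite size_map => Hi Hj Hij.
  have [x0 _] : exists x0 : T * T, True.
    by move: Hi; case: (enum D) => [//|a _ _]; exists a.
  rewrite !(nth_map x0) //.
  set xi := nth x0 (enum D) i; set xj := nth x0 (enum D) j.
  have Hxi : xi \in D by rewrite -mem_enum mem_nth.
  have Hxj : xj \in D by rewrite -mem_enum mem_nth.
  have Nij : xi != xj by rewrite nth_uniq // enum_uniq.
  rewrite !walkE // -setI_eq0; apply/eqP/setP => e; rewrite in_set0 in_setI.
  apply/negbTE/negP => /andP [E1 E2]; rewrite !in_set in E1 E2.
  by move/eqP: Nij; apply; apply: (el_inj Hxi Hxj E1 E2).
Qed.

End Assemble.
End App.

Lemma degge (T : finType) (d : rel T) : simple_digraph d -> k_edge_connected d 6 ->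
  forall v, 6 <= deg d v.
Proof.
move=> hs [hT hc] v; rewrite leqNgt; apply/negP => Hlt.
set S := [set dedge d v u | u in [set u | adj d v u]].
have HS : #|S :&: edges d| < 6.
  apply: leq_ltn_trans Hlt; apply: leq_trans (subset_leq_card (subsetIl _ _)) _.
  exact: leq_imset_card.
have Hcon := hc S HS.
have [u Huv] : exists u, u != v.
  move/card_gt1P: hT => [x [y [_ _ Nxy]]].
  case: (x =P v) => [Ex|/eqP Nx]; last by exists x.
  by exists y; rewrite -Ex eq_sym.
have := Hcon v u; case/connectP => [[|y p] /= Hp Eu]; first by move/eqP: Huv; apply.
move: Hp => /andP [Hvy _].
case: hs => _ hns.
have Hy : y \in [set u | adj d v u].
  by rewrite inE /adj; move: Hvy; rewrite /adj; case: (d v y); case: (d y v).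
move: Hvy; rewrite /adj; case Hd1: (d v y); case Hd2: (d y v) => //=.
- by have := hns v y; rewrite Hd1 Hd2.
- rewrite ?andbT ?orbF => /negP; apply; apply/imsetP; exists y => //; by rewrite /dedge Hd1.
- rewrite ?andbT ?orbF => /negP; apply; apply/imsetP; exists y => //; by rewrite /dedge Hd1.
Qed.

Theorem mainTheorem4 (T : finType) (d : rel T) (A : {set T}) :
  simple_digraph d ->
  k_edge_connected d 6 ->
  bipartite_classes d A ->
  (forall v, v \in A -> 5 %| deg d v) ->
  forall M F H : {set T * T},
    fractional_factorization d A M F H ->
    canonical_decomposition d M F H.
Proof.
move=> hs hk hb h5 M F H [[hE hMF hMH hFH] [hMdir [hAv hBv]]].
have hA1 : forall v, v \in A -> indeg M v = outdeg F v.
  by move=> v Hv; have [_ -> _ _ ->] := hAv v Hv.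
have hA2 : forall v, v \in A -> indeg F v = outdeg H v.
  by move=> v Hv; have [-> _ _ -> _] := hAv v Hv.
have hA3 : forall v, v \in A -> indeg F v = outdeg F v.
  by move=> v Hv; have [-> -> _ _ _] := hAv v Hv.
have hAk : forall v, v \in A -> 2 <= outdeg F v.
  move=> v Hv; have [_ -> _ _ _] := hAv v Hv.
  have := degge hs hk v; have /dvdnP [q ->] := h5 v Hv.
  rewrite mulnK //; lia.
have hBF : forall v, v \notin A -> indeg F v = outdeg F v.
  by move=> v Hv; have [] := hBv v; rewrite ?inE.
have hBH : forall v, v \notin A -> indeg H v = outdeg H v.
  by move=> v Hv; have [] := hBv v; rewrite ?inE.
have [s1 [s1P s1I s1S]] := stage hb (edgeF hE) hBF.
have [s2 [s2P s2I s2S]] := stage hb (edgeH hE) hBH.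
have [lab [tip [hv hne]]] := labtip hb hE hA1 hA2 hA3 hAk s1P s1I s1S.
exact: (decomp hs hb hE hMF hMH hFH hMdir hA1 hA2 s1P s1I s1S s2P s2I s2S hv hne).
Qed.
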